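(* Let $R$ be a $*$-ring with unity and let $a,b$ be central elements of $R$ generating the same ideal, i.e. $Ra=Rb$. Then the posets $(a]=\{x\in R: x\leq a\}$ and $(b]=\{x\in R: x\leq b\}$, ordered by the natural partial order, are order isomorphic.
   Context: The natural partial order on a $*$-ring $R$ with unity: $a\leq b$ iff there is $x\in R$ with $a=xa=xb=ax^*=bx^*$. *)

(* Defs.v *)
From HB Require Import structures.
From mathcomp Require Import all_boot all_algebra.
Set Implicit Arguments. Unset Strict Implicit. Unset Printing Implicit Defensive.
Import GRing.Theory.
Local Open Scope ring_scope.

Definition is_star (R : pzRingType) (star : R -> R) : Prop :=
  [/\ forall x y : R, star (x + y) = star x + star y,
      forall x y : R, star (x * y) = star y * star x
    & forall x : R, star (star x) = x].

Definition star_le (R : pzRingType) (star : R -> R) (a b : R) : Prop :=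
  exists x : R, [/\ a = x * a, a = x * b, a = a * star x & a = b * star x].

Definition central (R : pzRingType) (a : R) : Prop := forall y : R, a * y = y * a.

Definition in_left_ideal (R : pzRingType) (a x : R) : Prop := exists r : R, x = r * a.

Definition downset (R : pzRingType) (star : R -> R) (a : R) : Type :=
  {x : R | star_le star x a}.

Definition downsets_order_iso (R : pzRingType) (star : R -> R) (a b : R) : Prop :=
  exists f : downset star a -> downset star b,
    bijective f /\
    forall u v : downset star a,
      star_le star (proj1_sig u) (proj1_sig v) <->
      star_le star (proj1_sig (f u)) (proj1_sig (f v)).

(* Main.v *)
Require Import Defs.
From mathcomp Require Import all_boot all_algebra.
Local Open Scope ring_scope.
Import GRing.Theory.
From Stdlib Require Import ProofIrrelevance.

Lemma keyK (R : pzRingType) (a b s c w : R) : central a -> central b -> a * s = b ->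
  (c * a) * w * s = (c * a) * s * w.
Proof.
move=> ca cb hs.
have e1 : c * a * w * s = c * w * b by rewrite -(mulrA c a w) ca mulrA -mulrA hs.
have e2 : c * a * s * w = c * w * b by rewrite -(mulrA c a s) hs -mulrA cb mulrA.
by rewrite e1 e2.
Qed.

Section H.
Variables (R : pzRingType) (star : R -> R).

Lemma downK (a b s u : R) : is_star star -> central a -> central b -> a * s = b ->
  star_le star u a -> star_le star (u * s) b.
Proof.
move=> [_ _ _] ca cb hs [e [h1 h2 h3 h4]].
exists e; split.
- by rewrite mulrA -h1.
- by rewrite h2 -mulrA hs.
- by rewrite {1}h3 {1}h2 (@keyK _ _ _ _ _ _ ca cb hs) -h2.
- by rewrite cb -hs mulrA -ca -h4.
Qed.

Lemma leK (a b s u v : R) : is_star star -> central a -> central b -> a * s = b ->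
  star_le star u a -> star_le star v a ->
  star_le star u v -> star_le star (u * s) (v * s).
Proof.
move=> _ ca cb hs [e [_ he _ _]] [f [_ hf _ _]] [w [h1 h2 h3 h4]].
exists w; split.
- by rewrite mulrA -h1.
- by rewrite mulrA -h2.
- by rewrite {1}h3 {1}he (@keyK _ _ _ _ _ _ ca cb hs) -he.
- by rewrite {1}h4 {1}hf (@keyK _ _ _ _ _ _ ca cb hs) -hf.
Qed.

Lemma backK (a b s t u : R) : central b -> a * s = b -> b * t = a ->
  star_le star u a -> u * s * t = u.
Proof.
move=> cb hs ht [e [_ h2 _ _]].
by rewrite {1}h2 -(mulrA e a s) hs -mulrA ht -h2.
Qed.
End H.
Arguments downK {R star a b s u}.
Arguments leK {R star a b s u v}.
Arguments backK {R star a b s t u}.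

Theorem mainTheorem4 (R : pzRingType) (star : R -> R) (a b : R) :
  is_star star ->
  central a -> central b ->
  (forall x : R, in_left_ideal a x <-> in_left_ideal b x) ->
  downsets_order_iso star a b.
Proof.
move=> hst ca cb hI.
have [s hs] : exists s, a * s = b.
  have [r ->] : in_left_ideal a b by apply/hI; exists 1; rewrite mul1r.
  by exists r; rewrite ca.
have [t ht] : exists t, b * t = a.
  have [r ->] : in_left_ideal b a by apply/hI; exists 1; rewrite mul1r.
  by exists r; rewrite cb.
pose f (u : downset star a) : downset star b :=
  exist _ (proj1_sig u * s) (downK hst ca cb hs (proj2_sig u)).
pose g (u : downset star b) : downset star a :=
  exist _ (proj1_sig u * t) (downK hst cb ca ht (proj2_sig u)).
exists f; split.
- exists g.
  + move=> [u hu]; apply: subset_eq_compat. exact: (backK cb hs ht hu).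
  + move=> [u hu]; apply: subset_eq_compat. exact: (backK ca ht hs hu).
- move=> [u hu] [v hv] /=; split.
  + exact: (leK hst ca cb hs hu hv).
  + move=> h.
    rewrite -(backK cb hs ht hu) -(backK cb hs ht hv).
    exact: (leK hst cb ca ht (downK hst ca cb hs hu) (downK hst ca cb hs hv) h).
Qed.
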